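(* Let $p\geq 1$, $\vec n=(n_1,\dots,n_p)\in\mathbb N_0^p$, $N\in\mathbb N_0$ with $|\vec n|\le N$, and let $\alpha_1,\dots,\alpha_p,\beta,x\in\mathbb R$ be such that all Pochhammer symbols appearing in denominators below are nonzero. Then $$\sum_{l_1=0}^{n_1}\cdots\sum_{l_p=0}^{n_p}\frac{(-N)_{l_1+\cdots+l_p}\,(x)_{l_1+\cdots+l_p}}{(x+\beta+1)_{l_1+\cdots+l_p}}\,C^{l_1,\dots,l_p}_{\vec n}=\frac{(\beta+1)_{|\vec n|}(-N)_{|\vec n|}}{(x+\beta+1)_{|\vec n|}}\prod_{q=1}^p\frac{(\alpha_q-x+1)_{n_q}}{(\alpha_q+\beta+|\vec n|+1)_{n_q}}.$$
   Context: $(a)_m=a(a+1)\cdots(a+m-1)$, $(a)_0=1$; $|\vec n|=n_1+\cdots+n_p$. The coefficients (those of the multiple Hahn type II polynomials) are $$C^{l_1,\dots,l_p}_{\vec n}=\frac{(-N)_{|\vec n|}}{(-N)_{l_1+\cdots+l_p}}\prod_{i=1}^p\frac{(\alpha_i+1)_{n_i}}{(\alpha_i+\beta+|\vec n|+1)_{n_i}}\frac{(-n_i)_{l_i}}{l_i!}\frac{(\alpha_i+\beta+\sum_{k=1}^i n_k+1)_{\sum_{j=i}^p l_j}}{(\alpha_i+1)_{\sum_{j=i}^p l_j}}\prod_{i=1}^{p-1}\frac{(\alpha_i+n_i+1)_{\sum_{j=i+1}^p l_j}}{(\alpha_i+\beta+\sum_{k=1}^i n_k+1)_{\sum_{j=i+1}^p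 l_j}}.$$ *)

(* Defs.v *)
From mathcomp Require Import all_boot all_order all_algebra.
Set Implicit Arguments. Unset Strict Implicit. Unset Printing Implicit Defensive.
Import Order.TTheory GRing.Theory Num.Theory.
Local Open Scope ring_scope.

Definition poch {R : pzRingType} (a : R) (m : nat) : R :=
  \prod_(k < m) (a + k%:R).

(* |n| = n_1 + ... + n_p  (indices are 0-based: i : 'I_p stands for i+1) *)
Definition vabs {p : nat} (n : 'I_p -> nat) : nat := (\sum_(i < p) n i)%N.

Definition psum {p : nat} (n : 'I_p -> nat) (i : 'I_p) : nat :=
  (\sum_(k < p | (k <= i)%N) n k)%N.
Definition tsum {p : nat} (l : 'I_p -> nat) (i : 'I_p) : nat :=
  (\sum_(j < p | (i <= j)%N) l j)%N.
Definition tsum1 {p : nat} (l : 'I_p -> nat) (i : 'I_p) : nat :=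
  (\sum_(j < p | (i < j)%N) l j)%N.

Definition hahnC {R : fieldType} {p : nat} (N : nat) (alpha : 'I_p -> R) (beta : R)
    (n l : 'I_p -> nat) : R :=
  poch (- N%:R) (vabs n) / poch (- N%:R) (vabs l) *
  (\prod_(i < p)
     (poch (alpha i + 1) (n i) / poch (alpha i + beta + (vabs n)%:R + 1) (n i) *
      (poch (- (n i)%:R) (l i) / (l i)`!%:R) *
      (poch (alpha i + beta + (psum n i)%:R + 1) (tsum l i) /
       poch (alpha i + 1) (tsum l i)))) *
  (\prod_(i < p | (i.+1 < p)%N)
     (poch (alpha i + (n i)%:R + 1) (tsum1 l i) /
      poch (alpha i + beta + (psum n i)%:R + 1) (tsum1 l i))).

(* Main.v *)
Require Import Defs.
From mathcomp Require Import all_boot all_order all_algebra.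
From mathcomp Require Import ring.
Set Implicit Arguments. Unset Strict Implicit. Unset Printing Implicit Defensive.
Import Order.TTheory GRing.Theory Num.Theory.
Local Open Scope ring_scope.
From mathcomp Require Import zify.
From Stdlib Require Import FunctionalExtensionality.

Lemma poch0 {R : pzRingType} (a : R) : poch a 0 = 1.
Proof. by rewrite /poch big_ord0. Qed.

Lemma pochS {R : pzRingType} (a : R) m : poch a m.+1 = poch a m * (a + m%:R).
Proof. by rewrite /poch big_ord_recr. Qed.

Lemma poch_add {R : comPzRingType} (a : R) m k :
  poch a (m + k) = poch a m * poch (a + m%:R) k.
Proof.
elim: k => [|k IH]; first by rewrite addn0 poch0 mulr1.
by rewrite addnS !pochS IH natrD addrA mulrA.
Qed.

Lemma poch_nz_le {R : fieldType} (a : R) m k : poch a m != 0 -> (k <= m)%N -> poch a k != 0.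
Proof.
move=> H km; move: H; rewrite -(subnKC km) poch_add mulf_eq0 negb_or.
by case/andP.
Qed.

Lemma poch_neg_big {R : comPzRingType} n k : (n < k)%N -> poch (- (n%:R) : R) k = 0.
Proof.
by move=> nk; rewrite -(subnKC nk) poch_add pochS addNr mulr0 mul0r.
Qed.

Lemma poch_neg_ff {R : comPzRingType} n k :
  poch (- (n%:R) : R) k = (-1)^+k * (n ^_ k)%:R.
Proof.
elim: k => [|k IH]; first by rewrite poch0 expr0 ffactn0 mul1r.
rewrite pochS IH ffactnSr natrM exprS.
case: (leqP k n) => kn.
  rewrite natrB //; ring.
by rewrite ffact_small // mul0r !mulr0 mul0r.
Qed.

Lemma poch_neg_bin {R : comPzRingType} n k :
  poch (- (n%:R) : R) k = (-1)^+k * ('C(n, k) * k`!)%:R.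
Proof. by rewrite bin_ffact poch_neg_ff. Qed.

Lemma poch_neg_fact {R : numFieldType} k j : (j <= k)%N ->
  poch (- (k%:R) : R) j / k`!%:R = (-1)^+j / (k - j)`!%:R.
Proof.
move=> jk; rewrite poch_neg_bin -(bin_fact jk).
have h1 : (j`!%:R : R) != 0 by rewrite pnatr_eq0 -lt0n fact_gt0.
have h2 : ((k-j)`!%:R : R) != 0 by rewrite pnatr_eq0 -lt0n fact_gt0.
have h3 : (('C(k,j))%:R : R) != 0 by rewrite pnatr_eq0 -lt0n bin_gt0.
rewrite !natrM; field.
by rewrite h3 h1 h2.
Qed.

Lemma poch_rev {R : comPzRingType} (b : R) j :
  poch b j * (-1)^+j = poch (- b - j%:R + 1) j.
Proof.
elim: j b => [|j IH] b; first by rewrite !poch0 expr0 mulr1.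
have p1 : forall a : R, poch a 1 = a by move=> a; rewrite pochS poch0 mul1r addr0.
have e1 : poch b j.+1 = poch b j * (b + j%:R) by rewrite pochS.
have e3 : - b - j.+1%:R + 1 = - b - j%:R by rewrite mulrSr; ring.
have e2 : poch (- b - j.+1%:R + 1) j.+1 = (- b - j%:R) * poch (- b - j%:R + 1) j.
  by rewrite -add1n poch_add p1 e3.
rewrite e1 e2 -IH exprS; ring.
Qed.

Lemma vdm_poly {R : comPzRingType} n : forall A C : R,
  \sum_(k < n.+1) (-1)^+k * ('C(n, k))%:R * poch A k * poch (C + k%:R) (n - k)
  = poch (C - A) n.
Proof.
elim: n => [|n IH] A C.
  by rewrite big_ord_recl big_ord0 /= !poch0 addr0 expr0 bin0 !mul1r.
pose U (k : nat) := (-1)^+k * ('C(n, k))%:R * poch A k * poch (C + k%:R) (n.+1 - k).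
have HB : \sum_(k < n.+2) U k = (C + n%:R) * poch (C - A) n.
  rewrite big_ord_recr /= /U bin_small // mulr0 mul0r mul0r addr0 -IH mulr_sumr.
  apply: eq_bigr => k _; have kn : (k <= n)%N by rewrite -ltnS.
  rewrite subSn // pochS natrB //; ring.
have HA : \sum_(k < n.+1) (- A) * ((-1)^+k * ('C(n, k))%:R * poch (A + 1) k *
              poch ((C + 1) + k%:R) (n - k)) = - A * poch (C - A) n.
  by rewrite -mulr_sumr IH; congr (_ * poch _ _); ring.
rewrite pochS.
have -> : poch (C - A) n * (C - A + n%:R) = (C + n%:R) * poch (C - A) n + - A * poch (C - A) n by ring.
rewrite -HA -HB big_ord_recl [in RHS]big_ord_recl /U /= bin0 !expr0 !poch0 subn0 addr0.
rewrite -addrA -big_split /=; congr (_ + _).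
  by rewrite bin0.
have p1 : forall a : R, poch a 1 = a by move=> a; rewrite pochS poch0 mul1r addr0.
apply: eq_bigr => k _; rewrite /bump /= add1n.
have e : poch A k.+1 = A * poch (A + 1) k by rewrite -add1n poch_add p1.
have e2 : C + k.+1%:R = C + 1 + k%:R by rewrite mulrSr; ring.
rewrite e e2 subSS binS natrD exprS; ring.
Qed.


Lemma fact_nz {R : numFieldType} k : (k`!%:R : R) != 0.
Proof. by rewrite pnatr_eq0 -lt0n fact_gt0. Qed.

Lemma vdm {R : numFieldType} n (A C : R) : poch C n != 0 ->
  \sum_(k < n.+1) poch (- (n%:R)) k / k`!%:R * (poch A k / poch C k)
  = poch (C - A) n / poch C n.
Proof.
move=> Hn; rewrite -vdm_poly mulr_suml; apply: eq_bigr => k _.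
have kn : (k <= n)%N by rewrite -ltnS.
have ec : poch C n = poch C k * poch (C + k%:R) (n - k) by rewrite -poch_add subnKC.
move: Hn; rewrite ec mulf_eq0 negb_or => /andP [h1 h2].
have h3 := @fact_nz R k.
rewrite poch_neg_bin natrM; field.
by rewrite h3 h1 h2.
Qed.

Lemma sum_widen {R : nmodType} (F : nat -> R) m n : (m <= n)%N ->
  (forall j, (m < j)%N -> (j <= n)%N -> F j = 0) ->
  \sum_(j < m.+1) F j = \sum_(j < n.+1) F j.
Proof.
move=> mn H0.
rewrite -(big_mkord xpredT F) -(big_mkord xpredT F).
rewrite [RHS](@big_cat_nat _ _ _ m.+1) //=.
rewrite [X in _ + X]big_nat_cond [X in _ + X]big1 ?addr0 // => i /andP [/andP [h1 h2] _].
by apply: H0.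
Qed.

Lemma sum_shift {R : nmodType} (F : nat -> R) j n : (j <= n.+1)%N ->
  (forall k, (k < j)%N -> F k = 0) ->
  \sum_(k < n.+1) F k = \sum_(m < n.+1 - j) F (m + j)%N.
Proof.
move=> jn H0.
rewrite -(big_mkord xpredT F) (@big_cat_nat _ _ _ j) //=.
rewrite big_nat_cond big1 ?add0r; last by move=> i /andP [/andP [_ h] _]; apply: H0.
by rewrite -{1}(add0n j) big_addn big_mkord.
Qed.

Lemma saal {R : numFieldType} n (A B C D y : R) :
  B = C + y + n%:R -> D = A + y + 1 -> poch C n != 0 -> poch D n != 0 ->
  \sum_(k < n.+1) poch (- (n%:R)) k / k`!%:R * (poch A k * poch B k / (poch C k * poch D k))
  = poch (C - A) n * poch (y + 1) n / (poch C n * poch D n).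
Proof.
move=> eB eD HC HD.
pose u (k : nat) := poch (- (n%:R)) k / k`!%:R * (poch A k / poch C k).
pose v (k j : nat) := poch (- (k%:R)) j / j`!%:R * (poch (D - B) j / poch D j).
have step1 : forall k : 'I_n.+1,
    poch (- (n%:R)) k / k`!%:R * (poch A k * poch B k / (poch C k * poch D k))
    = \sum_(j < n.+1) u k * v k j.
  move=> k; have kn : (k <= n)%N by rewrite -ltnS.
  rewrite -mulr_sumr.
  rewrite -(@sum_widen _ (fun j => v k j) k n kn); last first.
    by move=> j kj _; rewrite /v poch_neg_big // !mul0r.
  rewrite /v (vdm _ (poch_nz_le HD kn)) subKr /u invfM; ring.
rewrite (eq_bigr _ (fun k _ => step1 k)) exchange_big /=.
have step3 : forall j : 'I_n.+1, \sum_(k < n.+1) u k * v k j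
    = poch (- (n%:R)) j / j`!%:R * (poch A j / poch D j) * (poch (C - A) n / poch C n).
  move=> j; have jn : (j <= n)%N by rewrite -ltnS.
  pose w (k : nat) := poch (- (n%:R)) k * poch A k / poch C k * (poch (- (k%:R)) j / k`!%:R).
  have e1 : forall k : 'I_n.+1, u k * v k j = poch (D - B) j / (j`!%:R * poch D j) * w k.
    by move=> k; rewrite /u /v /w !invfM; ring.
  rewrite (eq_bigr _ (fun k _ => e1 k)) -mulr_sumr.
  rewrite (@sum_shift _ w j n (leqW jn)); last first.
    by move=> k kj; rewrite /w (poch_neg_big kj) mul0r mulr0.
  have e2 : forall m : 'I_(n.+1 - j), w (m + j)%N = (-1)^+j * poch (- (n%:R)) j * poch A j / poch C j *
      (poch (- ((n - j)%:R)) m / m`!%:R * (poch (A + j%:R) m / poch (C + j%:R) m)).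
    move=> m; rewrite /w poch_neg_fact ?leq_addl // addnK addnC !poch_add natrB // opprB.
    have -> : - n%:R + j%:R = j%:R - n%:R :> R by ring.
    rewrite !invfM; ring.
  rewrite (eq_bigr _ (fun m _ => e2 m)) -mulr_sumr subSn //.
  have ec : poch C n = poch C j * poch (C + j%:R) (n - j) by rewrite -poch_add subnKC.
  have HC' := HC; rewrite ec mulf_eq0 negb_or in HC'; case/andP: HC' => hc1 hc2.
  rewrite (vdm _ hc2).
  have -> : C + j%:R - (A + j%:R) = C - A by ring.
  have eca : poch (C - A) n = poch (C - A) (n - j) * poch (C - A + (n - j)%:R) j by rewrite -poch_add subnK.
  have er := poch_rev (C - A + (n - j)%:R) j.
  have edb : D - B = - (C - A + (n - j)%:R) - j%:R + 1 by rewrite eB eD natrB //; ring.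
  have hd : poch D j != 0 := poch_nz_le HD jn.
  have hf := @fact_nz R j.
  rewrite ec eca edb -er.
  have hs : ((-1) ^+ j : R) * (-1) ^+ j = 1 by rewrite -exprMn mulrNN mulr1 expr1n.
  match goal with |- _ = ?r => apply: (etrans _ (_ : ((-1)^+j * (-1)^+j) * r = r)) end;
    last by rewrite hs mul1r.
  by field; rewrite hf hd hc1 hc2.
rewrite (eq_bigr _ (fun j _ => step3 j)) -mulr_suml vdm // eD.
have -> : A + y + 1 - A = y + 1 by ring.
by rewrite !invfM; ring.
Qed.

Lemma vabs_S {p} (f : 'I_p.+1 -> nat) : vabs f = (f ord0 + vabs (fun j => f (lift ord0 j)))%N.
Proof. by rewrite /vabs big_ord_recl. Qed.

Lemma psum_0 {p} (f : 'I_p.+1 -> nat) : psum f ord0 = f ord0.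
Proof.
by rewrite /psum big_mkcond big_ord_recl /= big1 ?addn0.
Qed.

Lemma psum_lift {p} (f : 'I_p.+1 -> nat) i :
  psum f (lift ord0 i) = (f ord0 + psum (fun j => f (lift ord0 j)) i)%N.
Proof.
rewrite /psum big_mkcond big_ord_recl /= [in RHS]big_mkcond /=; congr (_ + _)%N.
all: try (apply: eq_bigr => j _; rewrite /bump /= ?add1n ?ltnS //).
Qed.

Lemma tsum_0 {p} (f : 'I_p.+1 -> nat) : tsum f ord0 = vabs f.
Proof. by rewrite /tsum /vabs; apply: eq_bigl => j. Qed.

Lemma tsum_lift {p} (f : 'I_p.+1 -> nat) i :
  tsum f (lift ord0 i) = tsum (fun j => f (lift ord0 j)) i.
Proof.
rewrite /tsum big_mkcond big_ord_recl /= [in RHS]big_mkcond /= add0n.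
all: try (apply: eq_bigr => j _; rewrite /bump /= ?add1n ?ltnS //).
Qed.

Lemma tsum1_0 {p} (f : 'I_p.+1 -> nat) : tsum1 f ord0 = vabs (fun j => f (lift ord0 j)).
Proof.
rewrite /tsum1 big_mkcond big_ord_recl /= add0n /vabs.
all: try (apply: eq_bigr => j _; rewrite /bump /= ?add1n ?ltnS //).
Qed.

Lemma tsum1_lift {p} (f : 'I_p.+1 -> nat) i :
  tsum1 f (lift ord0 i) = tsum1 (fun j => f (lift ord0 j)) i.
Proof.
rewrite /tsum1 big_mkcond big_ord_recl /= [in RHS]big_mkcond /= add0n.
all: try (apply: eq_bigr => j _; rewrite /bump /= ?add1n ?ltnS //).
Qed.

Definition gfac {R : fieldType} {p} (b : R) (al : 'I_p -> R) (n l : 'I_p -> nat) (i : 'I_p) : R :=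
  poch (- (n i)%:R) (l i) / (l i)`!%:R *
  (poch (al i + b + (psum n i)%:R + 1) (tsum l i) / poch (al i + 1) (tsum l i)) *
  (poch (al i + (n i)%:R + 1) (tsum1 l i) / poch (al i + b + (psum n i)%:R + 1) (tsum1 l i)).

Definition Gt {R : fieldType} {p} (x b : R) (al : 'I_p -> R) (n l : 'I_p -> nat) : R :=
  poch x (vabs l) / poch (x + b + 1) (vabs l) * \prod_(i < p) gfac b al n l i.

Definition hd {R : fieldType} (x b a0 : R) (n0 a t : nat) : R :=
  poch x (a + t) / poch (x + b + 1) (a + t) *
  (poch (- n0%:R) a / a`!%:R *
   (poch (a0 + b + n0%:R + 1) (a + t) / poch (a0 + 1) (a + t)) *
   (poch (a0 + n0%:R + 1) t / poch (a0 + b + n0%:R + 1) t)).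

Lemma gfac_lift {R : fieldType} {p} (b : R) (al : 'I_p.+1 -> R) (n l : 'I_p.+1 -> nat) i :
  gfac b al n l (lift ord0 i) =
  gfac (b + (n ord0)%:R) (fun j => al (lift ord0 j)) (fun j => n (lift ord0 j))
       (fun j => l (lift ord0 j)) i.
Proof.
rewrite /gfac psum_lift tsum_lift tsum1_lift.
have -> : al (lift ord0 i) + b + (n ord0 + psum (fun j => n (lift ord0 j)) i)%:R + 1 =
  al (lift ord0 i) + (b + (n ord0)%:R) + (psum (fun j => n (lift ord0 j)) i)%:R + 1
  by rewrite natrD; ring.
by [].
Qed.

Lemma Gt_S {R : fieldType} {p} (x b : R) (al : 'I_p.+1 -> R) (n l : 'I_p.+1 -> nat) :
  Gt x b al n l = hd x b (al ord0) (n ord0) (l ord0) (vabs (fun j => l (lift ord0 j))) *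
    \prod_(i < p) gfac (b + (n ord0)%:R) (fun j => al (lift ord0 j)) (fun j => n (lift ord0 j))
       (fun j => l (lift ord0 j)) i.
Proof.
rewrite /Gt big_ord_recl (eq_bigr _ (fun i _ => gfac_lift b al n l i)).
rewrite {1}/gfac psum_0 tsum_0 tsum1_0 vabs_S /hd; ring.
Qed.

Lemma nz_split {R : fieldType} (a : R) m k : poch a (m + k) != 0 ->
  poch a m != 0 /\ poch (a + m%:R) k != 0.
Proof. by rewrite poch_add mulf_eq0 negb_or => /andP. Qed.

Lemma head_sum {R : numFieldType} (x b a0 : R) n0 t M : (n0 <= M)%N ->
  poch (x + b + 1) (n0 + t) != 0 -> poch (a0 + 1) (n0 + t) != 0 ->
  poch (a0 + b + n0%:R + 1) t != 0 ->
  \sum_(a < M.+1) hd x b a0 n0 a t =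
  poch (a0 - x + 1) n0 / poch (a0 + 1) n0 * (poch (b + 1) n0 / poch (x + b + 1) n0) *
  (poch x t / poch (x + (b + n0%:R) + 1) t).
Proof.
move=> hM H1 H2 H3.
rewrite -(@sum_widen _ (fun a => hd x b a0 n0 a t) n0 M hM); last first.
  by move=> j nj _; rewrite /hd (poch_neg_big nj); ring.
have [h1a h1b] := nz_split H1.
have [h2a h2b] := nz_split H2.
move: H1 H2; rewrite addnC => H1 H2.
have [h1c h1d] := nz_split H1.
have [h2c h2d] := nz_split H2.
pose c := poch x t * poch (a0 + n0%:R + 1) t / (poch (x + b + 1) t * poch (a0 + 1) t).
have eterm : forall a : 'I_n0.+1, hd x b a0 n0 a t =
   c * (poch (- (n0%:R)) a / a`!%:R * (poch (x + t%:R) a * poch (a0 + b + n0%:R + 1 + t%:R) a /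
        (poch (a0 + 1 + t%:R) a * poch (x + b + 1 + t%:R) a))).
  move=> a; have an : (a <= n0)%N by rewrite -ltnS.
  have hf := @fact_nz R a.
  have hx := poch_nz_le h1d an.
  have ha := poch_nz_le h2d an.
  rewrite /hd /c addnC !poch_add; field.
  by rewrite hf hx ha h1c h2c H3.
rewrite (eq_bigr _ (fun a _ => eterm a)) -mulr_sumr.
rewrite (@saal R n0 (x + t%:R) _ (a0 + 1 + t%:R) (x + b + 1 + t%:R) b) //; last 2 first.
- by ring.
- by ring.
have E1 : poch (a0 + 1 + t%:R) n0 = poch (a0 + 1) n0 * poch (a0 + 1 + n0%:R) t / poch (a0 + 1) t.
  have : poch (a0 + 1) (t + n0) = poch (a0 + 1) (n0 + t) by rewrite addnC.
  rewrite !poch_add => E; apply: (mulfI h2c); rewrite E; field; exact: h2c.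
have E2 : poch (x + b + 1 + t%:R) n0 = poch (x + b + 1) n0 * poch (x + b + 1 + n0%:R) t / poch (x + b + 1) t.
  have : poch (x + b + 1) (t + n0) = poch (x + b + 1) (n0 + t) by rewrite addnC.
  rewrite !poch_add => E; apply: (mulfI h1c); rewrite E; field; exact: h1c.
rewrite /c.
have -> : a0 + 1 + t%:R - (x + t%:R) = a0 - x + 1 by ring.
have -> : x + (b + n0%:R) + 1 = x + b + 1 + n0%:R by ring.
have -> : a0 + n0%:R + 1 = a0 + 1 + n0%:R by ring.
rewrite E1 E2; field.
by rewrite h1a h1b h2a h2b h1c h2c.
Qed.

Definition fcons {p M} (a : 'I_M) (g : {ffun 'I_p -> 'I_M}) : {ffun 'I_p.+1 -> 'I_M} :=
  [ffun i : 'I_p.+1 => if unlift ord0 i is Some j then g j else a].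

Lemma fcons0 {p M} (a : 'I_M) (g : {ffun 'I_p -> 'I_M}) : fcons a g ord0 = a.
Proof. by rewrite /fcons ffunE unlift_none. Qed.

Lemma fconsS {p M} (a : 'I_M) (g : {ffun 'I_p -> 'I_M}) j : fcons a g (lift ord0 j) = g j.
Proof. by rewrite /fcons ffunE liftK. Qed.

Lemma sum_ffunS {R : nmodType} {p M} (F : {ffun 'I_p.+1 -> 'I_M} -> R) :
  \sum_(f : {ffun 'I_p.+1 -> 'I_M}) F f =
  \sum_(a : 'I_M) \sum_(g : {ffun 'I_p -> 'I_M}) F (fcons a g).
Proof.
rewrite pair_big /=.
rewrite (reindex (fun q : 'I_M * {ffun 'I_p -> 'I_M} => fcons q.1 q.2)) //.
apply: onW_bij.
exists (fun f : {ffun 'I_p.+1 -> 'I_M} => (f ord0, [ffun j => f (lift ord0 j)])).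
  move=> [a g] /=; rewrite fcons0; congr (_, _); apply/ffunP => j.
  by rewrite ffunE fconsS.
move=> f; apply/ffunP => i; rewrite /fcons ffunE /=.
by case: unliftP => [j ->|->]; rewrite ?ffunE.
Qed.

Lemma key {R : numFieldType} (x : R) M p : forall (n : 'I_p -> nat) (al : 'I_p -> R) (b : R),
  (forall i, n i <= M)%N ->
  poch (x + b + 1) (vabs n) != 0 ->
  (forall i, poch (al i + 1) (tsum n i) != 0) ->
  (forall i, poch (al i + b + (psum n i)%:R + 1) (tsum1 n i) != 0) ->
  \sum_(l : {ffun 'I_p -> 'I_M.+1}) Gt x b al n (fun i => nat_of_ord (l i)) =
  poch (b + 1) (vabs n) / poch (x + b + 1) (vabs n) *
  \prod_(i < p) (poch (al i - x + 1) (n i) / poch (al i + 1) (n i)).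
Proof.
elim: p => [|p IH] n al b hM H1 H2 H3.
  have v0 : forall f : 'I_0 -> nat, vabs f = 0%N by move=> f; rewrite /vabs big_ord0.
  rewrite v0 !poch0 big_ord0 divr1 mulr1.
  rewrite (eq_bigr (fun _ => 1)); last by move=> l _; rewrite /Gt v0 !poch0 big_ord0 divr1 mulr1.
  rewrite sumr_const card_ffun card_ord.
  have -> : #|'I_0| = 0%N by rewrite card_ord.
  by rewrite expn0.
set n0 := n ord0.
set nt := fun j => n (lift ord0 j).
set alt := fun j => al (lift ord0 j).
set K := poch (al ord0 - x + 1) n0 / poch (al ord0 + 1) n0 *
         (poch (b + 1) n0 / poch (x + b + 1) n0).
have vn : vabs n = (n0 + vabs nt)%N by rewrite vabs_S.
have step : forall g : {ffun 'I_p -> 'I_M.+1},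
    \sum_(a < M.+1) Gt x b al n (fun i => nat_of_ord (fcons a g i)) =
    K * Gt x (b + n0%:R) alt nt (fun i => nat_of_ord (g i)).
  move=> g.
  have e : forall a : 'I_M.+1, Gt x b al n (fun i => nat_of_ord (fcons a g i)) =
     hd x b (al ord0) n0 a (vabs (fun j => nat_of_ord (g j))) *
     \prod_(i < p) gfac (b + n0%:R) alt nt (fun j => nat_of_ord (g j)) i.
    move=> a; rewrite Gt_S fcons0.
    have -> : (fun j => nat_of_ord (fcons a g (lift ord0 j))) = (fun j => nat_of_ord (g j)).
      by apply: functional_extensionality => j; rewrite fconsS.
    by [].
  rewrite (eq_bigr _ (fun a _ => e a)) -mulr_suml.
  case: (boolP [forall j, (g j <= nt j)%N]) => [/forallP hg | /forallP hg].
    have ht : (vabs (fun j => nat_of_ord (g j)) <= vabs nt)%N by apply: leq_sum => j _.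
    rewrite (@head_sum R x b (al ord0) n0 _ M (hM ord0)).
    - by rewrite /Gt /K; ring.
    - by apply: (poch_nz_le H1); rewrite vn leq_add2l.
    - by apply: (poch_nz_le (H2 ord0)); rewrite tsum_0 vn leq_add2l.
    - have := H3 ord0; rewrite psum_0 tsum1_0 => h; exact: (poch_nz_le h ht).
  have [j hj] : exists j, ~~ (g j <= nt j)%N.
    by apply/existsP; rewrite -negb_forall; apply/forallP.
  rewrite -ltnNge in hj.
  have P0 : \prod_(i < p) gfac (b + n0%:R) alt nt (fun j => nat_of_ord (g j)) i = 0.
    by rewrite (bigD1 j) //= {1}/gfac (poch_neg_big hj) !mul0r.
  by rewrite /Gt P0 !mulr0.
rewrite sum_ffunS exchange_big /= (eq_bigr _ (fun g _ => step g)) -mulr_sumr.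
have ex : x + (b + n0%:R) + 1 = x + b + 1 + n0%:R by ring.
have eb : b + n0%:R + 1 = b + 1 + n0%:R by ring.
rewrite (IH nt alt (b + n0%:R)).
- rewrite vn !poch_add big_ord_recl /K ex eb !invfM; ring.
- by move=> i; apply: hM.
- by rewrite ex; move: H1; rewrite vn => /nz_split [].
- by move=> i; rewrite /alt /nt -tsum_lift; exact: H2.
- move=> i; have := H3 (lift ord0 i); rewrite psum_lift tsum1_lift natrD.
  have -> : al (lift ord0 i) + b + ((n ord0)%:R + (psum (fun j : 'I_p => n (lift ord0 j)) i)%:R) + 1
     = alt i + (b + n0%:R) + (psum nt i)%:R + 1 by rewrite /alt /nt /n0; ring.
  by [].
Qed.

Lemma tsum1_last {p} (l : 'I_p -> nat) (i : 'I_p) : ~~ (i.+1 < p)%N -> tsum1 l i = 0%N.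
Proof.
move=> hi; rewrite /tsum1 big1 // => j hij.
have := ltn_ord j; move: hi hij; rewrite -leqNgt; lia.
Qed.

Lemma le_tsum {p} (l : 'I_p -> nat) (i : 'I_p) : (l i <= tsum l i)%N.
Proof. by rewrite /tsum (bigD1 i) //= leq_addr. Qed.

Lemma le_vabs {p} (l : 'I_p -> nat) (i : 'I_p) : (l i <= vabs l)%N.
Proof. by rewrite /vabs (bigD1 i) //= leq_addr. Qed.

Lemma Gt_zero {R : fieldType} {p} (x b : R) al (n l : 'I_p -> nat) j :
  (n j < l j)%N -> Gt x b al n l = 0.
Proof. by move=> h; rewrite /Gt (bigD1 j) //= {1}/gfac (poch_neg_big h) !mul0r mulr0. Qed.

Theorem mainTheorem1 (R : realFieldType) (p : nat) (n : 'I_p -> nat) (N : nat)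
    (alpha : 'I_p -> R) (beta x : R) :
  (0 < p)%N ->
  (vabs n <= N)%N ->
  (* all Pochhammer symbols appearing in denominators are nonzero *)
  (forall l : 'I_p -> nat, (forall i, (l i <= n i)%N) ->
     [/\ poch (- (N%:R : R)) (vabs l) != 0,
         poch (x + beta + 1) (vabs l) != 0,
         (forall i, poch (alpha i + 1) (tsum l i) != 0) &
         (forall i : 'I_p, (i.+1 < p)%N ->
            poch (alpha i + beta + (psum n i)%:R + 1) (tsum1 l i) != 0)]) ->
  (forall i, poch (alpha i + beta + (vabs n)%:R + 1) (n i) != 0) ->
  poch (x + beta + 1) (vabs n) != 0 ->
  \sum_(l : {ffun 'I_p -> 'I_N.+1} | [forall i, (l i <= n i)%N])
     (poch (- (N%:R : R)) (vabs (fun i => nat_of_ord (l i))) *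
      poch x (vabs (fun i => nat_of_ord (l i))) /
      poch (x + beta + 1) (vabs (fun i => nat_of_ord (l i))) *
      hahnC N alpha beta n (fun i => nat_of_ord (l i)))
  = poch (beta + 1) (vabs n) * poch (- (N%:R : R)) (vabs n) / poch (x + beta + 1) (vabs n) *
    \prod_(q < p) (poch (alpha q - x + 1) (n q) /
                   poch (alpha q + beta + (vabs n)%:R + 1) (n q)).
Proof.
move=> hp hN Hl Hd Hx.
have [_ _ H2 H3'] := Hl n (fun i => leqnn _).
have H3 : forall i, poch (alpha i + beta + (psum n i)%:R + 1) (tsum1 n i) != 0.
  move=> i; case: (boolP (i.+1 < p)%N) => hi; first exact: H3'.
  by rewrite tsum1_last // poch0 oner_neq0.
pose c0 := poch (- (N%:R : R)) (vabs n) *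
  \prod_(i < p) (poch (alpha i + 1) (n i) / poch (alpha i + beta + (vabs n)%:R + 1) (n i)).
have eA : forall l : {ffun 'I_p -> 'I_N.+1}, [forall i, (l i <= n i)%N] ->
   poch (- (N%:R : R)) (vabs (fun i => nat_of_ord (l i))) *
      poch x (vabs (fun i => nat_of_ord (l i))) /
      poch (x + beta + 1) (vabs (fun i => nat_of_ord (l i))) *
      hahnC N alpha beta n (fun i => nat_of_ord (l i))
   = c0 * Gt x beta alpha n (fun i => nat_of_ord (l i)).
  move=> l /forallP hl.
  have [hN1 hx1 _ _] := Hl _ hl.
  rewrite /hahnC /Gt /c0.
  set lf := fun i => nat_of_ord (l i).
  have eP1 : \prod_(i < p)
     (poch (alpha i + 1) (n i) / poch (alpha i + beta + (vabs n)%:R + 1) (n i) *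
      (poch (- (n i)%:R) (lf i) / (lf i)`!%:R) *
      (poch (alpha i + beta + (psum n i)%:R + 1) (tsum lf i) /
       poch (alpha i + 1) (tsum lf i))) =
     \prod_(i < p) (poch (alpha i + 1) (n i) / poch (alpha i + beta + (vabs n)%:R + 1) (n i)) *
     \prod_(i < p) ((poch (- (n i)%:R) (lf i) / (lf i)`!%:R) *
      (poch (alpha i + beta + (psum n i)%:R + 1) (tsum lf i) /
       poch (alpha i + 1) (tsum lf i))).
    rewrite -big_split /=; apply: eq_bigr => i _; ring.
  have eP2 : \prod_(i < p | (i.+1 < p)%N)
     (poch (alpha i + (n i)%:R + 1) (tsum1 lf i) /
      poch (alpha i + beta + (psum n i)%:R + 1) (tsum1 lf i)) =
     \prod_(i < p)
     (poch (alpha i + (n i)%:R + 1) (tsum1 lf i) /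
      poch (alpha i + beta + (psum n i)%:R + 1) (tsum1 lf i)).
    rewrite [LHS]big_mkcond; apply: eq_bigr => i _; case: ifP => // /negbT hi.
    by rewrite tsum1_last // !poch0 divr1.
  have eG : \prod_(i < p) gfac beta alpha n lf i =
     \prod_(i < p) ((poch (- (n i)%:R) (lf i) / (lf i)`!%:R) *
      (poch (alpha i + beta + (psum n i)%:R + 1) (tsum lf i) /
       poch (alpha i + 1) (tsum lf i))) *
     \prod_(i < p)
     (poch (alpha i + (n i)%:R + 1) (tsum1 lf i) /
      poch (alpha i + beta + (psum n i)%:R + 1) (tsum1 lf i)).
    by rewrite -big_split.
  rewrite eP1 eP2 eG; field.
  by rewrite hN1 hx1.
rewrite (eq_bigr _ eA) big_mkcond /=.
rewrite (eq_bigr (fun l : {ffun 'I_p -> 'I_N.+1} => c0 * Gt x beta alpha n (fun i => nat_of_ord (l i)))); last first.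
  move=> l _; case: ifP => // /negbT.
  rewrite negb_forall => /existsP [j]; rewrite -ltnNge => hj.
  by rewrite (@Gt_zero R p x beta alpha n (fun i => nat_of_ord (l i)) j hj) mulr0.
rewrite -mulr_sumr (@key R x N p n alpha beta) //; last first.
  by move=> i; apply: leq_trans (le_vabs n i) hN.
rewrite /c0.
have -> : \prod_(q < p) (poch (alpha q - x + 1) (n q) /
                   poch (alpha q + beta + (vabs n)%:R + 1) (n q)) =
   \prod_(i < p) (poch (alpha i + 1) (n i) / poch (alpha i + beta + (vabs n)%:R + 1) (n i)) *
   \prod_(i < p) (poch (alpha i - x + 1) (n i) / poch (alpha i + 1) (n i)).
  rewrite -big_split; apply: eq_bigr => i _ /=.
  have h := poch_nz_le (H2 i) (le_tsum n i).
  by field; rewrite h Hd.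
ring.
Qed.
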